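(* For every $n\ge1$, $$\sum_{e\in\mathbf I_n(021)}t^{\mathrm{asc}(e)}=\sum_{k=0}^{\lfloor (n-1)/2\rfloor}\big|\widetilde{\mathbf I}_{n,k}(021)\big|\,t^k(1+t)^{n-1-2k}.$$
   Context: $\mathbf I_n=\{(e_1,\dots,e_n):0\le e_i\le i-1\}$; $\mathbf I_n(021)$ is the set of $e\in\mathbf I_n$ with no $i<j<k$ such that $e_i<e_k<e_j$. $\mathrm{ASC}(e)=\{i\in[n-1]:e_i<e_{i+1}\}$, $\mathrm{asc}(e)=|\mathrm{ASC}(e)|$. An index $i\in[n-2]$ is a double ascent of $e$ if $\{i,i+1\}\subseteq\mathrm{ASC}(e)$. $\widetilde{\mathbf I}_{n,k}(021)=\{e\in\mathbf I_n(021):\mathrm{asc}(e)=k,\ e\text{ has no double ascents, and } e_{n-1}\ge e_n\}$ (for $n=1$ the last condition is vacuous). *)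

(* Defs.v *)
From mathcomp Require Import all_boot all_order all_algebra.
Set Implicit Arguments. Unset Strict Implicit. Unset Printing Implicit Defensive.
Import GRing.Theory.

(* An element of I_n is encoded as f : {ffun 'I_n -> 'I_n}, with the 0-based
   position i holding e_{i+1}; the constraint 0 <= e_{i+1} <= i. *)
Definition inv_seq (n : nat) (f : {ffun 'I_n -> 'I_n}) : bool :=
  [forall i : 'I_n, (f i : nat) <= i].

Definition ev n (f : {ffun 'I_n -> 'I_n}) (i : nat) : nat :=
  match insub i with Some j => (f j : nat) | None => 0 end.

Definition avoids021 n (f : {ffun 'I_n -> 'I_n}) : bool :=
  [forall i : 'I_n, forall j : 'I_n, forall k : 'I_n,
     ~~ [&& i < j, j < k, f i < f k & f k < f j]].

Definition inv021 n (f : {ffun 'I_n -> 'I_n}) : bool := inv_seq f && avoids021 f.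

(* 0-based ascent positions i (i+1 in [n-1]) with e_{i+1} < e_{i+2}. *)
Definition is_asc n (f : {ffun 'I_n -> 'I_n}) (i : nat) : bool :=
  (i.+1 < n) && (ev f i < ev f i.+1).

Definition asc n (f : {ffun 'I_n -> 'I_n}) : nat := count (is_asc f) (iota 0 n.-1).

Definition no_double_asc n (f : {ffun 'I_n -> 'I_n}) : bool :=
  all (fun i => ~~ (is_asc f i && is_asc f i.+1)) (iota 0 n.-2).

Definition last_cond n (f : {ffun 'I_n -> 'I_n}) : bool :=
  (n <= 1) || (ev f n.-1 <= ev f n.-2).

Definition tilde_I n (k : nat) (f : {ffun 'I_n -> 'I_n}) : bool :=
  [&& inv021 f, asc f == k, no_double_asc f & last_cond f].

(* Main.v *)
Require Import Defs.
From mathcomp Require Import all_boot all_order all_algebra.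
From mathcomp Require Import zify ring.
Set Implicit Arguments. Unset Strict Implicit. Unset Printing Implicit Defensive.
Import GRing.Theory.
Local Open Scope ring_scope.

Notation R := {poly int}.
Notation S := {poly {poly int}}.

Definition zeroN (N : nat) (p : S) : Prop := forall i, (i < N)%N -> p`_i = 0.

Lemma zeroN0 p : zeroN 0 p. Proof. by []. Qed.
Lemma zeroN_zero N : zeroN N 0. Proof. by move=> i _; rewrite coef0. Qed.
Lemma zeroND N p q : zeroN N p -> zeroN N q -> zeroN N (p + q).
Proof. by move=> hp hq i hi; rewrite coefD hp // hq // addr0. Qed.
Lemma zeroNN N p : zeroN N p -> zeroN N (- p).
Proof. by move=> hp i hi; rewrite coefN hp // oppr0. Qed.
Lemma zeroNB N p q : zeroN N p -> zeroN N q -> zeroN N (p - q).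
Proof. by move=> hp hq; apply: zeroND => //; apply: zeroNN. Qed.
Lemma zeroNMl N c p : zeroN N p -> zeroN N (c * p).
Proof.
move=> hp i hi; rewrite coefM big1 // => j _; rewrite hp ?mulr0 //.
by apply: leq_ltn_trans hi; rewrite leq_subr.
Qed.
Lemma zeroNMr N c p : zeroN N p -> zeroN N (p * c).
Proof. by move=> hp; rewrite mulrC; apply: zeroNMl. Qed.
Lemma zeroNX N p : zeroN N p -> zeroN N.+1 ('X * p).
Proof. by move=> hp [|i] hi; rewrite coefXM //= hp. Qed.
Lemma zeroNW N p : zeroN N.+1 p -> zeroN N p.
Proof. by move=> hp i hi; apply: hp; apply: ltnW. Qed.
Lemma zeroN_sum N I (r : seq I) (F : I -> S) :
  (forall i, zeroN N (F i)) -> zeroN N (\sum_(i <- r) F i).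
Proof.
move=> h; elim: r => [|a r ih]; first by rewrite big_nil; apply: zeroN_zero.
by rewrite big_cons; apply: zeroND.
Qed.
Lemma zeroN_eq N p q : p = q -> zeroN N q -> zeroN N p.
Proof. by move=> ->. Qed.

Lemma zeroN_cancel N D c : zeroN N (D * (1 - 'X * c)) -> zeroN N D.
Proof.
move=> h i; elim: i {-2}i (leqnn i) => [|i ih] j hj hjN.
  have := h j hjN; move: hj; rewrite leqn0 => /eqP ->.
  by rewrite mulrBr mulr1 coefB mulrCA coefXM /= subr0.
have := h j hjN; rewrite mulrBr mulr1 coefB mulrCA coefXM.
case: j hj hjN => [|j] hj hjN; first by rewrite subr0.
rewrite /= coefM big1 ?subr0 // => k _.
have hk := ltn_ord k.
rewrite ih ?mul0r //.
  by rewrite -ltnS (leq_trans hk).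
by apply: leq_ltn_trans hjN; rewrite -ltnS (leq_trans hk).
Qed.

Definition tr (N : nat) (F : nat -> R) : S := \sum_(i < N) (F i)%:P * 'X^i.

Lemma coef_tr N F i : (i < N)%N -> (tr N F)`_i = F i.
Proof.
move=> hi; rewrite /tr coef_sum (bigD1 (Ordinal hi)) //= coefCM coefXn eqxx mulr1.
rewrite big1 ?addr0 // => j /eqP hj; rewrite coefCM coefXn.
case: eqP => [e|]; last by rewrite mulr0.
by exfalso; apply: hj; apply: val_inj.
Qed.

Lemma eq_tr N F G : (forall i, F i = G i) -> tr N F = tr N G.
Proof. by move=> h; apply: eq_bigr => i _; rewrite h. Qed.

Lemma trS N F : tr N.+1 F = (F 0%N)%:P + 'X * tr N (fun i => F i.+1).
Proof.
rewrite /tr big_ord_recl /= expr0 mulr1 big_distrr /=; congr (_ + _).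
by apply: eq_bigr => i _; rewrite exprS mulrCA.
Qed.

Lemma trD N F G : tr N (fun i => F i + G i) = tr N F + tr N G.
Proof. by rewrite /tr -big_split /=; apply: eq_bigr => i _; rewrite polyCD mulrDl. Qed.
Lemma trM N c F : tr N (fun i => c * F i) = c%:P * tr N F.
Proof. by rewrite /tr big_distrr; apply: eq_bigr => i _; rewrite polyCM -mulrA. Qed.
Lemma tr0 N : tr N (fun _ => 0) = 0.
Proof. by rewrite /tr big1 // => i _; rewrite mul0r. Qed.
Lemma tr_sum N I (r : seq I) (F : I -> nat -> R) :
  tr N (fun i => \sum_(h <- r) F h i) = \sum_(h <- r) tr N (F h).
Proof.
elim: r => [|a r ih].
  rewrite big_nil -(tr0 N); apply: eq_tr => i; by rewrite big_nil.
rewrite big_cons -ih -trD; apply: eq_tr => i; by rewrite big_cons.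
Qed.

Inductive kind := KP | KZ | KT.
Definition isZ k := if k is KZ then true else false.
Definition nZ k := if k is KP then KP else KZ.

Section Machine.
Variables (sw : bool -> bool -> R) (fin : bool -> R).

Fixpoint Fl (m H : nat) (k : kind) (a : bool) {struct m} : R :=
  match m with
  | 0 => fin a
  | m'.+1 => sw a false * Fl m' H.+1 (nZ k) false
           + (if k is KP then 0 else sw a (isZ k) * Fl m' H.+1 KT (isZ k))
           + sw a true * \sum_(h < H.+1) Fl m' h KT true
  end.

Definition U N H k a : S := tr N (fun m => Fl m H k a).

Lemma trFl N H k a : tr N (fun i => Fl i.+1 H k a) =
  (sw a false)%:P * U N H.+1 (nZ k) false
  + (if k is KP then 0 else (sw a (isZ k))%:P * U N H.+1 KT (isZ k))
  + (sw a true)%:P * \sum_(h < H.+1) U N h KT true.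
Proof.
rewrite /U -tr_sum -!trM; case: k; rewrite ?addr0 -!trD;
  apply: eq_tr => i //=; by rewrite addr0.
Qed.

Lemma UN N H k a : U N.+1 H k a = (fin a)%:P + 'X * tr N (fun i => Fl i.+1 H k a).
Proof. by rewrite /U trS. Qed.

Lemma zeroN_trS N F : zeroN N (tr N.+1 F - tr N F).
Proof.
rewrite /tr big_ord_recr /= addrAC subrr add0r.
by move=> i hi; rewrite coefCM coefXn (ltn_eqF hi) mulr0.
Qed.

Definition ttX : S := ('X : R)%:P.
Definition KK N : S := 1 + ttX * 'X * U N 0 KT true.

Hypothesis hsw : forall a, sw a true = 'X * fin a.

Lemma shift N : forall H k a, zeroN N (U N H.+1 k a - U N H k a * KK N).
Proof.
elim: N => [|N ih] H k a; first exact: zeroN0.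
have hK : zeroN N.+1 (KK N - KK N.+1).
  have -> : KK N - KK N.+1 = ttX * ('X * - (U N.+1 0 KT true - U N 0 KT true)) by rewrite /KK; ring.
  by apply: zeroNMl; apply: zeroNX; apply: zeroNN; apply: zeroN_trS.
have -> : U N.+1 H.+1 k a - U N.+1 H k a * KK N.+1 =
   (U N.+1 H.+1 k a - U N.+1 H k a * KK N) + U N.+1 H k a * (KK N - KK N.+1) by ring.
apply: zeroND; last by apply: zeroNMl.
rewrite !UN !trFl big_ord_recl /=.
set S1 := \sum_(i < H.+1) _.
set S0 := \sum_(h < H.+1) _.
have hS : zeroN N (S1 - S0 * KK N).
  by rewrite /S1 /S0 big_distrl -sumrB; apply: zeroN_sum => i; exact: ih.
rewrite hsw polyCM -/ttX.
set c0 := (sw a false)%:P.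
set f := (fin a)%:P.
have h1 := ih H.+1 (nZ k) false.
have h2 := ih H.+1 KT (isZ k).
case: k h1 h2 => /= h1 h2.
- set X1 := U N H.+2 KP false. set Y1 := U N H.+1 KP false.
  have -> : f + 'X * (c0 * X1 + 0 + ttX * f * (U N 0 KT true + S1)) -
     (f + 'X * (c0 * Y1 + 0 + ttX * f * S0)) * KK N =
     'X * (c0 * (X1 - Y1 * KK N) + ttX * f * (S1 - S0 * KK N)) by rewrite /KK; ring.
  by apply: zeroNX; apply: zeroND; apply: zeroNMl.
- set X1 := U N H.+2 KZ false. set Y1 := U N H.+1 KZ false.
  set X2 := U N H.+2 KT true. set Y2 := U N H.+1 KT true.
  set c1 := (sw a true)%:P.
  have -> : f + 'X * (c0 * X1 + c1 * X2 + ttX * f * (U N 0 KT true + S1)) -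
     (f + 'X * (c0 * Y1 + c1 * Y2 + ttX * f * S0)) * KK N =
     'X * (c0 * (X1 - Y1 * KK N) + c1 * (X2 - Y2 * KK N) + ttX * f * (S1 - S0 * KK N)) by rewrite /KK; ring.
  by apply: zeroNX; apply: zeroND; [apply: zeroND|]; apply: zeroNMl.
- set X1 := U N H.+2 KZ false. set Y1 := U N H.+1 KZ false.
  set X2 := U N H.+2 KT false. set Y2 := U N H.+1 KT false.
  set c1 := (sw a false)%:P.
  have -> : f + 'X * (c0 * X1 + c1 * X2 + ttX * f * (U N 0 KT true + S1)) -
     (f + 'X * (c0 * Y1 + c1 * Y2 + ttX * f * S0)) * KK N =
     'X * (c0 * (X1 - Y1 * KK N) + c1 * (X2 - Y2 * KK N) + ttX * f * (S1 - S0 * KK N)) by rewrite /KK; ring.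
  by apply: zeroNX; apply: zeroND; [apply: zeroND|]; apply: zeroNMl.
Qed.

Lemma zeroN_U N H k a : zeroN N (U N H k a - U N.+1 H k a).
Proof. by rewrite -opprB; apply: zeroNN; apply: zeroN_trS. Qed.

Lemma zeroN_UK N H k a : zeroN N (U N H k a * KK N - U N.+1 H k a * KK N.+1).
Proof.
have -> : U N H k a * KK N - U N.+1 H k a * KK N.+1 =
  (U N H k a - U N.+1 H k a) * KK N + (U N.+1 H k a * (ttX * 'X)) * (U N 0 KT true - U N.+1 0 KT true)
  by rewrite /KK; ring.
by apply: zeroND; [apply: zeroNMr|apply: zeroNMl]; apply: zeroN_U.
Qed.

Lemma level0 N k a : zeroN N (U N 0 k a - ((fin a)%:P + 'X * (
   (sw a false)%:P * U N 0 (nZ k) false * KK N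
   + (if k is KP then 0 else (sw a (isZ k))%:P * U N 0 KT (isZ k) * KK N)
   + (sw a true)%:P * U N 0 KT true))).
Proof.
case: N => [|N]; first exact: zeroN0.
rewrite UN trFl big_ord1.
have h1 : zeroN N (U N 1 (nZ k) false - U N.+1 0 (nZ k) false * KK N.+1).
  have -> : U N 1 (nZ k) false - U N.+1 0 (nZ k) false * KK N.+1 =
    (U N 1 (nZ k) false - U N 0 (nZ k) false * KK N) +
    (U N 0 (nZ k) false * KK N - U N.+1 0 (nZ k) false * KK N.+1) by ring.
  by apply: zeroND; [apply: shift|apply: zeroN_UK].
have h2 : zeroN N (U N 1 KT (isZ k) - U N.+1 0 KT (isZ k) * KK N.+1).
  have -> : U N 1 KT (isZ k) - U N.+1 0 KT (isZ k) * KK N.+1 =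
    (U N 1 KT (isZ k) - U N 0 KT (isZ k) * KK N) +
    (U N 0 KT (isZ k) * KK N - U N.+1 0 KT (isZ k) * KK N.+1) by ring.
  by apply: zeroND; [apply: shift|apply: zeroN_UK].
have h3 := @zeroN_U N 0 KT true.
set c0 := (sw a false)%:P. set c1 := (sw a true)%:P. set f := (fin a)%:P.
case: k h1 h2 => /= h1 h2.
- set X1 := U N 1 KP false. set Y1 := U N.+1 0 KP false.
  have -> : f + 'X * (c0 * X1 + 0 + c1 * U N 0 KT true) -
     (f + 'X * (c0 * Y1 * KK N.+1 + 0 + c1 * U N.+1 0 KT true)) =
     'X * (c0 * (X1 - Y1 * KK N.+1) + c1 * (U N 0 KT true - U N.+1 0 KT true)) by ring.
  by apply: zeroNX; apply: zeroND; apply: zeroNMl.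
- set X1 := U N 1 KZ false. set Y1 := U N.+1 0 KZ false.
  set X2 := U N 1 KT true. set Y2 := U N.+1 0 KT true.
  set c2 := (sw a true)%:P.
  have -> : f + 'X * (c0 * X1 + c2 * X2 + c1 * U N 0 KT true) -
     (f + 'X * (c0 * Y1 * KK N.+1 + c2 * Y2 * KK N.+1 + c1 * Y2)) =
     'X * (c0 * (X1 - Y1 * KK N.+1) + c2 * (X2 - Y2 * KK N.+1) + c1 * (U N 0 KT true - Y2)) by ring.
  by apply: zeroNX; apply: zeroND; [apply: zeroND|]; apply: zeroNMl.
- set X1 := U N 1 KZ false. set Y1 := U N.+1 0 KZ false.
  set X2 := U N 1 KT false. set Y2 := U N.+1 0 KT false.
  set c2 := (sw a false)%:P.
  have -> : f + 'X * (c0 * X1 + c2 * X2 + c1 * U N 0 KT true) -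
     (f + 'X * (c0 * Y1 * KK N.+1 + c2 * Y2 * KK N.+1 + c1 * U N.+1 0 KT true)) =
     'X * (c0 * (X1 - Y1 * KK N.+1) + c2 * (X2 - Y2 * KK N.+1) + c1 * (U N 0 KT true - U N.+1 0 KT true)) by ring.
  by apply: zeroNX; apply: zeroND; [apply: zeroND|]; apply: zeroNMl.
Qed.

End Machine.

Definition swW (a b : bool) : R := if b then 'X else 1.
Definition finW (a : bool) : R := 1.
Definition swG (a b : bool) : R :=
  if b then (if a then 0 else 'X) else (if a then 1 else 1 + 'X).
Definition finG (a : bool) : R := if a then 0 else 1.

Lemma hswW a : swW a true = 'X * finW a. Proof. by rewrite /swW /finW mulr1. Qed.
Lemma hswG a : swG a true = 'X * finG a. Proof. by case: a; rewrite /swG /finG ?mulr0 ?mulr1. Qed.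

Definition cubic (p : S) : S := p - (1 + (1 + ttX) * 'X * p + ttX * 'X^2 * p^+2 + ttX * 'X^2 * p^+3).

Lemma cubic_uniq N p q : zeroN N (cubic p) -> zeroN N (cubic q) -> zeroN N (p - q).
Proof.
move=> hp hq; apply: (@zeroN_cancel _ _ ((1 + ttX) + ttX * 'X * (p + q) + ttX * 'X * (p^+2 + p * q + q^+2))).
have -> : (p - q) * (1 - 'X * ((1 + ttX) + ttX * 'X * (p + q) + ttX * 'X * (p^+2 + p * q + q^+2)))
  = cubic p - cubic q by rewrite /cubic; ring.
by apply: zeroNB.
Qed.

Lemma cubicW N : zeroN N (cubic (U swW finW N 0 KP false)).
Proof.
have A1 := @level0 swW finW hswW N KP false.
have A2 := @level0 swW finW hswW N KZ false.
have An := @level0 swW finW hswW N KT false.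
have Aa := @level0 swW finW hswW N KT true.
move: A1 A2 An Aa; rewrite /= /swW /finW -/ttX polyC1 !mul1r.
set p := U _ _ N 0 KP false. set z := U _ _ N 0 KZ false.
set n := U _ _ N 0 KT false. set T := U _ _ N 0 KT true.
rewrite /KK -/T.
set e := 1 + ttX * 'X * T.
move=> A1 A2 An Aa.
have hn : zeroN N (n - T).
  have -> : n - T = (n - (1 + 'X * (z * e + n * e + ttX * T))) -
     (T - (1 + 'X * (z * e + n * e + ttX * T))) by ring.
  by apply: zeroNB.
have A3 : zeroN N (T - (1 + 'X * (z * e + T * e + ttX * T))).
  have -> : T - (1 + 'X * (z * e + T * e + ttX * T)) =
    (T - (1 + 'X * (z * e + n * e + ttX * T))) + 'X * e * (n - T) by ring.
  by apply: zeroND => //; apply: zeroNMl.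
have R2 : zeroN N (z - e * p).
  apply: (@zeroN_cancel _ _ e).
  have -> : (z - e * p) * (1 - 'X * e) =
    (z - (1 + 'X * (z * e + ttX * T * e + ttX * T))) - e * (p - (1 + 'X * (p * e + 0 + ttX * T)))
    by rewrite /e; ring.
  by apply: zeroNB => //; apply: zeroNMl.
set Q := e * (1 + 'X * p).
have -> : cubic p =
  (ttX * 'X * (T - (1 + 'X * (z * e + T * e + ttX * T))) + ttX * 'X^2 * e * (z - e * p)) * (1 + 'X * p)^+2
  + (p - (1 + 'X * (p * e + 0 + ttX * T))) *
    ((1 + 'X * p) * (1 - ttX * 'X + 'X) - (ttX * 'X^2 * p + 'X) * (p + Q))
  by rewrite /cubic /Q /e; ring.
apply: zeroND; last by apply: zeroNMr.
apply: zeroNMr; apply: zeroND; apply: zeroNMl => //.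
Qed.

Lemma cubicG N : zeroN N (cubic (U swG finG N 0 KP false)).
Proof.
have B1 := @level0 swG finG hswG N KP false.
have B2 := @level0 swG finG hswG N KZ false.
have B3 := @level0 swG finG hswG N KT false.
have B4 := @level0 swG finG hswG N KT true.
move: B1 B2 B3 B4; rewrite /= /swG /finG -/ttX polyC1 polyCD polyC0 polyC1 -/ttX !mul1r !mul0r.
set p := U _ _ N 0 KP false. set z := U _ _ N 0 KZ false.
set n := U _ _ N 0 KT false. set T := U _ _ N 0 KT true.
rewrite /KK -/T.
set K := 1 + ttX * 'X * T.
move=> B1 B2 B3 B4.
have R2 : zeroN N (z - K * p).
  apply: (@zeroN_cancel _ _ ((1 + ttX) * K)).
  have -> : (z - K * p) * (1 - 'X * ((1 + ttX) * K)) =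
    (z - (1 + 'X * ((1 + ttX) * z * K + ttX * T * K + ttX * T))) - K * (p - (1 + 'X * ((1 + ttX) * p * K + 0 + ttX * T)))
    by rewrite /K; ring.
  by apply: zeroNB => //; apply: zeroNMl.
have R3 : zeroN N (n - p * (1 + (1 + ttX) * 'X * K * p)).
  apply: (@zeroN_cancel _ _ ((1 + ttX) * K)).
  have -> : (n - p * (1 + (1 + ttX) * 'X * K * p)) * (1 - 'X * ((1 + ttX) * K)) =
    (n - (1 + 'X * ((1 + ttX) * z * K + (1 + ttX) * n * K + ttX * T)))
    + (1 + ttX) * 'X * K * (z - K * p)
    - (1 + (1 + ttX) * 'X * K * p) * (p - (1 + 'X * ((1 + ttX) * p * K + 0 + ttX * T)))
    by rewrite /K; ring.
  by apply: zeroNB; [apply: zeroND => //|]; apply: zeroNMl.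
set Q := K * (1 + (1 + ttX) * 'X * p).
have -> : cubic p =
  (ttX * 'X * (T - (0 + 'X * (z * K + n * K + 0))) + ttX * 'X^2 * K * ((z - K * p) + (n - p * (1 + (1 + ttX) * 'X * K * p)))) * (1 + (1 + ttX) * 'X * p)
  + (p - (1 + 'X * ((1 + ttX) * p * K + 0 + ttX * T))) * (1 - ttX * 'X^2 * p * (1 + p + Q))
  by rewrite /cubic /Q /K; ring.
apply: zeroND; last by apply: zeroNMr.
apply: zeroNMr; apply: zeroND; apply: zeroNMl => //.
by apply: zeroND.
Qed.

Lemma FlWG m : Fl swW finW m 0 KP false = Fl swG finG m 0 KP false.
Proof.
have h := cubic_uniq (@cubicW m.+1) (@cubicG m.+1).
have := h m (ltnSn m); rewrite coefB /U !coef_tr // => /eqP; rewrite subr_eq0 => /eqP.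
done.
Qed.

Definition nz (s : seq nat) i := nth 0%N s i.
Arguments nz : simpl never.

Fixpoint invs (n : nat) : seq (seq nat) :=
  if n is n'.+1 then [seq rcons s v | s <- invs n', v <- iota 0 n] else [:: [::]].

Definition isinv (s : seq nat) := all (fun i => nz s i <= i)%N (iota 0 (size s)).

Lemma nth0_rcons s v i : (i < size s)%N -> nz (rcons s v) i = nz s i.
Proof. by move=> h; rewrite /nz nth_rcons h. Qed.
Lemma nth0_rcons_last s v : nz (rcons s v) (size s) = v.
Proof. by rewrite /nz nth_rcons ltnn eqxx. Qed.

Lemma iotaS0 n : iota 0 n.+1 = rcons (iota 0 n) n.
Proof. by rewrite -addn1 iotaD add0n cats1. Qed.

Lemma isinv_rcons s v : isinv (rcons s v) = isinv s && (v <= size s)%N.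
Proof.
rewrite /isinv size_rcons iotaS0 all_rcons nth0_rcons_last andbC; congr andb.
apply: eq_in_all => i; rewrite mem_iota add0n => /andP [_ h].
by rewrite nth0_rcons.
Qed.

Lemma mem_invs n s : (s \in invs n) = (size s == n) && isinv s.
Proof.
elim: n s => [|n ih] s.
  by case: s => [|a s] //=; rewrite inE.
case/lastP: s => [|s v].
  apply/negbTE/allpairsP => -[[s v] /= [_ _ e]].
  by move: e; case: s.
rewrite size_rcons eqSS isinv_rcons.
apply/allpairsP/idP => [[[s' v'] []]|].
  rewrite mem_iota add0n ltnS /= => hs hv e.
  case: (rcons_inj e) => -> ->; move: hs; rewrite ih => /andP [/eqP hs ->].
  by rewrite hs eqxx /=.
move=> /and3P [/eqP hs hi hv]; exists (s, v); split.
- by rewrite ih hs eqxx.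
- by rewrite mem_iota add0n ltnS -hs.
- by [].
Qed.

Lemma uniq_invs n : uniq (invs n).
Proof.
elim: n => [|n ih] //.
change (uniq [seq rcons s v | s <- invs n, v <- iota 0 n.+1]).
apply: allpairs_uniq => //; first exact: iota_uniq.
by move=> [s v] [s' v'] _ _ /= e; case: (rcons_inj e) => -> ->.
Qed.

Definition maxs (s : seq nat) := foldr maxn 0%N s.
Lemma maxs_rcons s v : maxs (rcons s v) = maxn (maxs s) v.
Proof. by elim: s => [|a s ih] /=; rewrite ?max0n ?maxn0 // ih maxnA. Qed.
Lemma maxs_leq s v : (maxs s <= v)%N = all (fun j => nz s j <= v)%N (iota 0 (size s)).
Proof.
have -> : all (fun j => nz s j <= v)%N (iota 0 (size s)) = all (fun x => x <= v)%N s.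
  by rewrite -{3}(mkseq_nth 0%N s) /mkseq all_map.
by elim: s => [|a s ih] //=; rewrite geq_max ih.
Qed.

Definition oks (s : seq nat) :=
  all (fun k => (nz s k == 0%N) || all (fun j => nz s j <= nz s k)%N (iota 0 k)) (iota 0 (size s)).

Lemma oks_rcons s v : oks (rcons s v) = oks s && ((v == 0%N) || (maxs s <= v)%N).
Proof.
rewrite /oks size_rcons iotaS0 all_rcons nth0_rcons_last maxs_leq andbC; congr andb.
  apply: eq_in_all => i; rewrite mem_iota add0n => /andP [_ h].
  rewrite nth0_rcons //; congr orb; apply: eq_in_all => j; rewrite mem_iota add0n => /andP [_ hj].
  by rewrite nth0_rcons // (ltn_trans hj).
congr orb; apply: eq_in_all => j; rewrite mem_iota add0n => /andP [_ h].
by rewrite nth0_rcons.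
Qed.

Definition last0 (s : seq nat) := nz s (size s).-1.
Definition lastasc (s : seq nat) := (1 < size s)%N && (nz s (size s).-2 < nz s (size s).-1)%N.
Definition ascs (s : seq nat) := count (fun i => nz s i < nz s i.+1)%N (iota 0 (size s).-1).
Definition ndas (s : seq nat) :=
  all (fun i => ~~ ((nz s i < nz s i.+1) && (nz s i.+1 < nz s i.+2)))%N (iota 0 (size s).-2).

Lemma last0_rcons s v : last0 (rcons s v) = v.
Proof. by rewrite /last0 size_rcons /= nth0_rcons_last. Qed.

Lemma lastasc_rcons s v : (0 < size s)%N -> lastasc (rcons s v) = (last0 s < v)%N.
Proof.
move=> h; rewrite /lastasc size_rcons ltnS h /= nth0_rcons_last /last0.
by rewrite nth0_rcons // prednK.
Qed.

Lemma ascs_rcons s v : (0 < size s)%N -> ascs (rcons s v) = (ascs s + (last0 s < v))%N.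
Proof.
move=> h; rewrite /ascs size_rcons succnK -{1}(prednK h) iotaS0 -[rcons (iota _ _) _]cats1 count_cat.
congr addn.
  apply: eq_in_count => i; rewrite mem_iota add0n => /andP [_ hi].
  by rewrite !nth0_rcons //; lia.
by rewrite /= addn0 prednK // nth0_rcons_last nth0_rcons ?prednK // /last0.
Qed.

Lemma ndas_rcons s v : (0 < size s)%N ->
  ndas (rcons s v) = ndas s && ~~ (lastasc s && (last0 s < v)%N).
Proof.
move=> h; have [h1|h2] : size s = 1%N \/ (1 < size s)%N by lia.
  by rewrite /ndas /lastasc size_rcons h1.
have ha : ((size s).+1.-2 = ((size s).-2).+1)%N by lia.
rewrite /ndas /lastasc size_rcons ha h2 andTb iotaS0 all_rcons andbC; congr andb.
  apply: eq_in_all => i; rewrite mem_iota add0n => /andP [_ hi].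
  by rewrite !nth0_rcons //; lia.
have hb : ((size s).-2.+1 = (size s).-1)%N by lia.
have hc : ((size s).-2.+2 = size s)%N by lia.
rewrite hc hb /last0 nth0_rcons_last !nth0_rcons //; lia.
Qed.

Lemma ascs_bound s : (0 < size s)%N -> ndas s -> (2 * ascs s <= (size s).-1 + lastasc s)%N.
Proof.
elim/last_ind: s => [//|s v ih] _.
case: (posnP (size s)) => hs.
  by move: hs => /size0nil ->.
rewrite ndas_rcons // ascs_rcons // lastasc_rcons // size_rcons => /andP [hn hl].
have := ih hs hn.
move: hl; case: (lastasc s); case: (last0 s < v)%N => //= _; lia.
Qed.

Section Bridge.
Variables (sw : bool -> bool -> R) (fin : bool -> R).

Fixpoint Fv (m n M l : nat) (a : bool) {struct m} : R :=
  if m is m'.+1 then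
    \sum_(v <- iota 0 n.+1) (if (v == 0%N) || (M <= v)%N
         then sw a (l < v)%N * Fv m' n.+1 (maxn M v) v (l < v)%N else 0)
  else fin a.

Variable wt : seq nat -> R.
Hypothesis Hwt : forall s v, (0 < size s)%N -> wt (rcons s v) = wt s * sw (lastasc s) (last0 s < v)%N.

Lemma bridge m : forall n, \sum_(x <- invs (n.+1 + m) | oks x) wt x * fin (lastasc x)
   = \sum_(s <- invs n.+1 | oks s) wt s * Fv m n.+1 (maxs s) (last0 s) (lastasc s).
Proof.
elim: m => [|m ih] n; first by rewrite addn0.
rewrite addnS -addSn ih.
change (invs n.+2) with [seq rcons s v | s <- invs n.+1, v <- iota 0 n.+2].
rewrite big_mkcond big_allpairs_dep [RHS]big_mkcond !big_seq; apply: eq_bigr => s hs.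
have hsz : (0 < size s)%N by move: hs; rewrite mem_invs => /andP [/eqP -> _].
case ho : (oks s).
  rewrite [Fv _ _ _ _ _]/= big_distrr; apply: eq_bigr => v _.
  rewrite oks_rcons ho /= Hwt // maxs_rcons last0_rcons lastasc_rcons //.
  by case: ifP => _; rewrite ?mulr0 // mulrA.
by rewrite big1 // => v _; rewrite oks_rcons ho.
Qed.
End Bridge.

Lemma sum_rev_iota c : forall b (g : nat -> R),
  \sum_(v <- iota b c) g ((b + c).-1 - v)%N = \sum_(h < c) g h.
Proof.
elim: c => [|c ih] b g; first by rewrite big_nil big_ord0.
rewrite /= big_cons big_ord_recr /= addrC; congr (_ + _).
  by congr g; lia.
by rewrite -(ih b.+1) addSnnS.
Qed.

Section Bridge2.
Variables (sw : bool -> bool -> R) (fin : bool -> R).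

Definition kindof (M l : nat) := if M == 0%N then KP else if l == 0%N then KZ else KT.

Lemma Fv_Fl m : forall n M l a, (M < n)%N -> (l == 0%N) || (l == M) ->
  (M == 0%N) ==> (l == 0%N) -> (l == 0%N) ==> ~~ a ->
  Fv sw fin m n M l a = Fl sw fin m (n - M).-1 (kindof M l) a.
Proof.
elim: m => [|m ih] n M l a hMn hl hM ha //.
rewrite [Fv _ _ _ _ _ _ _]/= big_cons /= ltn0 maxn0.
rewrite ih; [| lia | by rewrite eqxx | by rewrite eqxx implybT | by []].
have e1 : ((n.+1 - M).-1 = ((n - M).-1).+1)%N by lia.
rewrite e1 /kindof.
case: (posnP M) => hM0.
  subst M; move: hM ha; rewrite eqxx /= => /eqP hl0; subst l => /= ha.
  rewrite (negbTE ha) addr0; congr (_ + _).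
  rewrite subn0; have -> : ((n.-1).+1 = n)%N by lia.
  rewrite big_distrr -(sum_rev_iota n 1 (fun h => sw false true * Fl sw fin m h KT true)).
  rewrite !big_seq; apply: eq_bigr => v; rewrite mem_iota => /andP [hv1 hv2].
  rewrite leq0n orbT hv1 max0n ih;
    [| lia | by rewrite eqxx orbT | by apply/implyP => /eqP; lia | by apply/implyP => /eqP; lia].
  rewrite /kindof; have -> : (v == 0%N) = false by lia.
  by congr (_ * Fl _ _ _ _ _ _); lia.
have hMne : (M == 0%N) = false by lia.
rewrite ?hMne /=.
have e2 : n = ((M.-1) + (n - M).+1)%N by lia.
rewrite {2}e2 iotaD big_cat /= big1_seq ?add0r; last first.
  move=> v; rewrite mem_iota => /andP [hv1 hv2].
  have -> : (v == 0%N) = false by lia.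
  by have -> : (M <= v)%N = false by lia.
have -> : (1 + M.-1 = M)%N by lia.
rewrite big_cons leqnn orbT maxnn.
have hlM : (l < M)%N = (l == 0%N) by case/orP: hl => /eqP ->; lia.
rewrite ih;
  [| lia | by rewrite eqxx orbT | by apply/implyP => /eqP; lia | by apply/implyP => /eqP; lia].
rewrite ?e1 /kindof ?hMne.
rewrite hlM -[RHS]addrA; congr (_ + _).
  by case: (l == 0%N).
congr (_ + _).
  by case: (l == 0%N).
have -> : (((n - M).-1).+1 = n - M)%N by lia.
rewrite big_distrr -(sum_rev_iota (n - M) M.+1 (fun h => sw a true * Fl sw fin m h KT true)).
rewrite !big_seq; apply: eq_bigr => v; rewrite mem_iota => /andP [hv1 hv2].
have -> : (M <= v)%N by lia.
have -> : (l < v)%N by case/orP: hl => /eqP ->; lia.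
have -> : (maxn M v = v)%N by lia.
rewrite orbT ih;
  [| lia | by rewrite eqxx orbT | by apply/implyP => /eqP; lia | by apply/implyP => /eqP; lia].
rewrite /kindof; have -> : (v == 0%N) = false by lia.
by congr (_ * Fl _ _ _ _ _ _); lia.
Qed.
End Bridge2.

Section Conv.
Variable n : nat.
Implicit Types f : {ffun 'I_n -> 'I_n}.

Definition tos f : seq nat := mkseq (ev f) n.

Lemma size_tos f : size (tos f) = n. Proof. by rewrite size_mkseq. Qed.

Lemma nth_tos f i : nz (tos f) i = ev f i.
Proof.
rewrite /nz; case: (ltnP i n) => h; first by rewrite nth_mkseq.
by rewrite nth_default ?size_tos // /ev insubN // -leqNgt.
Qed.

Lemma ev_ord f (j : 'I_n) : ev f j = f j.
Proof. by rewrite /ev valK. Qed.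

Lemma tos_inj : injective tos.
Proof.
move=> f g e; apply/ffunP => j; apply: val_inj.
by have := congr1 (fun s => nz s j) e; rewrite /= !nth_tos !ev_ord.
Qed.

Lemma isinv_tos f : isinv (tos f) = inv_seq f.
Proof.
rewrite /isinv size_tos /inv_seq; apply/allP/forallP => [h j|h i].
  by rewrite -ev_ord -nth_tos; apply: h; rewrite mem_iota add0n ltn_ord.
rewrite mem_iota add0n => /andP [_ hi].
by have := h (Ordinal hi); rewrite nth_tos -ev_ord.
Qed.

Lemma mem_tos s : (s \in [seq tos f | f <- enum [pred f | inv_seq f]]) = (s \in invs n).
Proof.
rewrite mem_invs; apply/mapP/idP => [[f]|/andP [/eqP hs hi]].
  by rewrite mem_enum inE => hf ->; rewrite size_tos eqxx isinv_tos.
have hlt : forall i : 'I_n, (nz s i < n)%N.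
  move=> i; move/allP: hi => /(_ i); rewrite mem_iota add0n hs ltn_ord => /(_ isT) h.
  exact: leq_ltn_trans h (ltn_ord i).
exists [ffun i => Ordinal (hlt i)].
  rewrite mem_enum inE; apply/forallP => i; rewrite ffunE /=.
  by move/allP: hi => /(_ i); rewrite mem_iota add0n hs ltn_ord => /(_ isT).
apply: (@eq_from_nth _ 0%N); first by rewrite size_tos.
move=> i; rewrite hs => hin; rewrite -/(nz s i) -/(nz _ i) nth_tos.
by rewrite (_ : i = Ordinal hin) // ev_ord ffunE.
Qed.

Lemma sum_ffun_invs (P : pred (seq nat)) (G : seq nat -> R) :
  \sum_(f | inv_seq f && P (tos f)) G (tos f) = \sum_(s <- invs n | P s) G s.
Proof.
have hp : perm_eq [seq tos f | f <- enum [pred f | inv_seq f]] (invs n).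
  apply: uniq_perm; last exact: mem_tos.
    by rewrite map_inj_uniq ?enum_uniq //; exact: tos_inj.
  exact: uniq_invs.
rewrite -(perm_big _ hp) big_map big_enum_cond /=.
by apply: eq_bigl => f; rewrite inE.
Qed.

Lemma asc_tos f : asc f = ascs (tos f).
Proof.
rewrite /asc /ascs size_tos; apply: eq_in_count => i; rewrite mem_iota add0n => /andP [_ hi].
rewrite /is_asc !nth_tos; have -> : (i.+1 < n)%N by lia. by [].
Qed.

Lemma nda_tos f : no_double_asc f = ndas (tos f).
Proof.
rewrite /no_double_asc /ndas size_tos; apply: eq_in_all => i; rewrite mem_iota add0n => /andP [_ hi].
rewrite /is_asc !nth_tos; have -> : (i.+1 < n)%N by lia. have -> : (i.+2 < n)%N by lia. by [].
Qed.

Lemma lc_tos f : last_cond f = ~~ lastasc (tos f).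
Proof. by rewrite /last_cond /lastasc size_tos !nth_tos negb_and -leqNgt -leqNgt. Qed.

Lemma avoid_tos f : inv_seq f -> avoids021 f = oks (tos f).
Proof.
move=> hinv; rewrite /avoids021 /oks size_tos.
apply/forallP/allP => [h k|h i].
  rewrite mem_iota add0n => /andP [_ hk].
  rewrite nth_tos; case: eqP => //= hk0; apply/allP => j; rewrite mem_iota add0n => /andP [_ hj].
  have hjn : (j < n)%N by lia.
  rewrite !nth_tos leqNgt; apply/negP => hlt.
  have h0 : (0 < n)%N by lia.
  have e0 : ev f 0 = 0%N.
    by move/forallP: hinv => /(_ (Ordinal h0)); rewrite -ev_ord /= leqn0 => /eqP.
  have hj0 : (0 < j)%N.
    by case: (posnP j) hlt => // ->; rewrite e0 ltn0.
  move: (h (Ordinal h0)) => /forallP /(_ (Ordinal hjn)) /forallP /(_ (Ordinal hk)) /negP; apply.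
  rewrite /= hj0 hj -!ev_ord /= e0 hlt andbT /=.
  by rewrite lt0n; apply/eqP.
apply/forallP => j; apply/forallP => k; apply/negP => /and4P [hij hjk hik hkj].
move: (h k); rewrite mem_iota add0n ltn_ord => /(_ isT) /orP [].
  by rewrite nth_tos ev_ord => /eqP e; move: hik; rewrite e ltn0.
move/allP => /(_ j); rewrite mem_iota add0n hjk => /(_ isT).
by rewrite !nth_tos !ev_ord leqNgt hkj.
Qed.
End Conv.

Definition wtW (s : seq nat) : R := 'X^(ascs s).
Lemma HwtW s v : (0 < size s)%N -> wtW (rcons s v) = wtW s * swW (lastasc s) (last0 s < v)%N.
Proof.
move=> h; rewrite /wtW ascs_rcons // exprD /swW.
by case: (last0 s < v)%N; rewrite ?expr1 ?expr0.
Qed.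

Definition wtG (s : seq nat) : R :=
  if ndas s then 'X^(ascs s) * (1 + 'X)^+((size s).-1 + lastasc s - 2 * ascs s) else 0.

Lemma HwtG s v : (0 < size s)%N -> wtG (rcons s v) = wtG s * swG (lastasc s) (last0 s < v)%N.
Proof.
move=> h; rewrite /wtG ndas_rcons // ascs_rcons // lastasc_rcons // size_rcons /=.
case hn: (ndas s); last by rewrite mul0r.
have hb := ascs_bound h hn.
rewrite /swG; move: hb; case: (lastasc s); case: (last0 s < v)%N => /= hb.
- by rewrite mulr0.
- rewrite addn0 mulr1; congr (_ * _ ^+ _); lia.
- rewrite addn1 exprS.
  have -> : ((size s + 1 - 2 * (ascs s).+1) = (size s).-1 + 0 - 2 * ascs s)%N by lia.
  ring.
- rewrite !addn0.
  have -> : ((size s - 2 * ascs s) = ((size s).-1 - 2 * ascs s).+1)%N by lia.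
  rewrite exprS; ring.
Qed.

Lemma start (sw : bool -> bool -> R) (fin : bool -> R) (wt : seq nat -> R)
  (Hwt : forall s v, (0 < size s)%N -> wt (rcons s v) = wt s * sw (lastasc s) (last0 s < v)%N)
  (h1 : wt [:: 0%N] = 1) m :
  \sum_(x <- invs m.+1 | oks x) wt x * fin (lastasc x) = Fl sw fin m 0 KP false.
Proof.
have := @bridge sw fin wt Hwt m 0%N; rewrite add1n => ->.
change (invs 1) with [:: [:: 0%N]].
rewrite big_mkcond big_seq1.
have -> : oks [:: 0%N] = true by vm_compute.
rewrite h1 mul1r.
have -> : maxs [:: 0%N] = 0%N by [].
have -> : last0 [:: 0%N] = 0%N by vm_compute.
have -> : lastasc [:: 0%N] = false by vm_compute.
by rewrite Fv_Fl.
Qed.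

Unset Implicit Arguments. Set Strict Implicit.

Theorem theorem4p6 (n : nat) (hn : (1 <= n)%N) :
  \sum_(f : {ffun 'I_n -> 'I_n} | inv021 f) ('X ^+ asc f : {poly int}) =
  \sum_(0 <= k < ((n - 1) %/ 2).+1)
     (#|[pred f : {ffun 'I_n -> 'I_n} | tilde_I k f]|%:R
        * 'X ^+ k * (1 + 'X) ^+ (n - 1 - 2 * k)).
Proof.
case: n hn => [//|n] _.
have L : \sum_(f : {ffun 'I_n.+1 -> 'I_n.+1} | inv021 f) ('X ^+ asc f : {poly int})
   = Fl swW finW n 0 KP false.
  have h1 : wtW [:: 0%N] = 1.
    by rewrite /wtW (_ : ascs [:: 0%N] = 0%N) ?expr0 //; vm_compute.
  rewrite -(@start swW finW wtW HwtW h1 n).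
  rewrite -(@sum_ffun_invs n.+1 oks (fun s => wtW s * finW (lastasc s))).
  apply: eq_big => f.
    by rewrite /inv021; case hi: (inv_seq f) => //=; rewrite avoid_tos.
  by move=> _; rewrite /wtW /finW mulr1 asc_tos.
have Rr : \sum_(0 <= k < ((n.+1 - 1) %/ 2).+1)
     (#|[pred f : {ffun 'I_n.+1 -> 'I_n.+1} | tilde_I k f]|%:R
        * 'X ^+ k * (1 + 'X) ^+ (n.+1 - 1 - 2 * k)) =
   \sum_(f : {ffun 'I_n.+1 -> 'I_n.+1} | inv_seq f && oks (tos f)) wtG (tos f) * finG (lastasc (tos f)).
  transitivity (\sum_(0 <= k < ((n.+1 - 1) %/ 2).+1) \sum_(f : {ffun 'I_n.+1 -> 'I_n.+1})
      (if tilde_I k f then 'X ^+ k * (1 + 'X) ^+ (n.+1 - 1 - 2 * k) else 0 : R)).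
    apply: eq_bigr => k _.
    rewrite -sumr_const big_distrl big_distrl /= big_mkcond; apply: eq_bigr => f _.
    by rewrite inE; case: (tilde_I k f); rewrite ?mul1r ?mul0r.
  rewrite exchange_big /= [RHS]big_mkcond; apply: eq_bigr => f _.
  case hT: (inv_seq f && oks (tos f) && ndas (tos f) && ~~ lastasc (tos f)).
    move: hT => /andP [/andP [/andP [hi ho] hd] hl].
    have hb := ascs_bound (s := tos f); rewrite size_tos in hb.
    have {hb} hb := hb isT hd; move: hb; rewrite (negbTE hl) addn0 /= => hb.
    rewrite hi ho /wtG hd (negbTE hl) /finG mulr1 size_tos addn0 /=.
    rewrite (bigD1_seq (ascs (tos f))); last first.
    - exact: iota_uniq.
    - rewrite mem_index_iota leq0n /= ltnS subn1 /= leq_divRL //; lia.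
    rewrite /= big1_seq ?addr0; last first.
      move=> k /andP [hk _]; rewrite /tilde_I asc_tos eq_sym (negbTE hk).
      by rewrite !andbF.
    rewrite /tilde_I /inv021 hi avoid_tos // ho asc_tos eqxx nda_tos hd lc_tos hl /=.
    by rewrite subn1.
  rewrite big1_seq; last first.
    move=> k _; rewrite /tilde_I /inv021 nda_tos lc_tos.
    case hi: (inv_seq f) hT => //=; rewrite avoid_tos //.
    by case: (oks _); case: (ndas _); case: (lastasc _) => //= _; rewrite andbF.
  case hi: (inv_seq f) hT => //= hT; case ho: (oks (tos f)) hT => //= hT.
  rewrite /wtG /finG; case hd: (ndas (tos f)) hT => /= hT; first by rewrite (negbFE hT) mulr0.
  by rewrite mul0r.
rewrite L Rr (@sum_ffun_invs n.+1 oks (fun s => wtG s * finG (lastasc s))).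
have h1 : wtG [:: 0%N] = 1.
  rewrite /wtG (_ : ndas [:: 0%N] = true); last by vm_compute.
  rewrite (_ : ascs [:: 0%N] = 0%N); last by vm_compute.
  rewrite (_ : lastasc [:: 0%N] = false); last by vm_compute.
  by rewrite /= expr0 mul1r.
by rewrite (@start swG finG wtG HwtG h1 n) FlWG.
Qed.
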